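(* (1) Let $(\mathcal T,(N_A,R_A),(N_B,R_B),\mathbb C,\xi)$ be an object of $\mathrm{RArr}(\mathcal A,\mathcal B)$, i.e. $\mathbb C=(C,\Delta,\varepsilon)$ is a comonad on $\mathcal A$ and $(R_A,\xi)$ is a comonad arrow from $\mathbb C$ to $N_BR_B$ with $\xi:CR_A\to R_AN_BR_B$ invertible. Then $(\mathcal T,(N_A,R_A),(N_B,R_B),\tau)$ is a pre-torsor, where $\tau=(\xi N_AR_AN_B)\circ(C\eta^AR_AN_B)\circ(\xi^{-1}N_B)\circ(R_AN_B\eta^B)$. (2) If $(F,t)$ is a morphism $(\mathcal T,(N_A,R_A),(N_B,R_B),\mathbb C,\xi)\to(\mathcal T',(N'_A,R'_A),(N'_B,R'_B),\mathbb C',\xi')$ in $\mathrm{RArr}(\mathcal A,\mathcal B)$, then $F$ is a morphism between the corresponding pre-torsors of (1).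
   Context: Conventions: $\circ$ vertical composition, juxtaposition horizontal composition; a functor's name denotes its identity transformation. Adjunctions $(N_A:\mathcal A\to\mathcal T,R_A)$, $(N_B:\mathcal B\to\mathcal T,R_B)$ with units $\eta^A,\eta^B$, counits $\epsilon^A,\epsilon^B$; $N_BR_B$ is a comonad on $\mathcal T$ with comultiplication $N_B\eta^BR_B$, counit $\epsilon^B$. A comonad arrow $(R_A,\xi)$ from $\mathbb C$ to $N_BR_B$ means $\xi:CR_A\to R_AN_BR_B$ with $(R_A\epsilon^B)\circ\xi=\varepsilon R_A$ and $(R_AN_B\eta^BR_B)\circ\xi=(\xi N_BR_B)\circ(C\xi)\circ(\Delta R_A)$. Pre-torsor: natural $\tau:R_AN_B\to R_AN_BR_BN_AR_AN_B$ with $(R_AN_BR_B\epsilon^AN_B)\circ\tau=R_AN_B\eta^B$, $(R_A\epsilon^BN_AR_AN_B)\circ\tau=\eta^AR_AN_B$, $(R_AN_BR_BN_A\tau)\circ\tau=(\tau R_BN_AR_AN_B)\circ\tau$. For a functor $F:\mathcal T'\to\mathcal T$ with $R_AF=R'_A$, $R_BF=R'_B$ put $a=(\epsilon^AFN'_A)\circ(N_A\eta'^A)$, $b=(\epsilon^BFN'_B)\circ(N_B\eta'^B)$. A morphism of pre-torsors is such $F$ with $(R_AbR_BaR_Ab)\circ\tau=\tau'\circ(R_Ab)$. A morphism in $\mathrm{RArr}(\mathcal A,\mathcal B)$ is a pair $(F,t)$ with $F$ such a functor and $t:\mathbb C\to\mathbb C'$ a comonad morphism satisfying $(R_AbR'_B)\circ(\xi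 F)=\xi'\circ(tR'_A)$. *)

(* Defs.v *)
(* Natural transformations are handled through their component families;
   an equation between natural transformations is stated componentwise. *)
Set Implicit Arguments.
Unset Strict Implicit.

Record Category := {
  ob :> Type;
  hom : ob -> ob -> Type;
  idm : forall a, hom a a;
  cmp : forall a b c, hom b c -> hom a b -> hom a c;
  cmp_id_l : forall a b (f : hom a b), cmp (idm b) f = f;
  cmp_id_r : forall a b (f : hom a b), cmp f (idm a) = f;
  cmp_assoc : forall a b c d (f : hom a b) (g : hom b c) (h : hom c d),
      cmp h (cmp g f) = cmp (cmp h g) f }.
Arguments hom {c} _ _ : rename.
Arguments idm {c} a : rename.
Arguments cmp {c a b c0} _ _ : rename.

(* vertical composition: g \oc f = "g after f" *)
Notation "g \oc f" := (cmp g f) (at level 40, left associativity).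

Record Functor (C D : Category) := {
  fobj :> C -> D;
  fmap : forall a b : C, hom a b -> hom (fobj a) (fobj b);
  fmap_id : forall a : C, fmap (idm a) = idm (fobj a);
  fmap_comp : forall (a b c : C) (f : hom a b) (g : hom b c),
      fmap (g \oc f) = fmap g \oc fmap f }.
Arguments fmap {C D} F {a b} _ : rename.

Definition Fcomp (C D E : Category) (G : Functor D E) (F : Functor C D)
  : Functor C E.
Proof.
  refine {| fobj := fun x => G (F x);
            fmap := fun a b f => fmap G (fmap F f) |}.
  - intro a. rewrite !fmap_id. reflexivity.
  - intros a b c f g. rewrite !fmap_comp. reflexivity.
Defined.

Record Adjunction (A T : Category) (N : Functor A T) (R : Functor T A) := {
  unit : forall x : A, hom x (R (N x));
  counit : forall y : T, hom (N (R y)) y;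
  unit_nat : forall (x x' : A) (f : hom x x'),
      unit x' \oc f = fmap R (fmap N f) \oc unit x;
  counit_nat : forall (y y' : T) (g : hom y y'),
      g \oc counit y = counit y' \oc fmap N (fmap R g);
  triangle_N : forall x : A, counit (N x) \oc fmap N (unit x) = idm (N x);
  triangle_R : forall y : T, fmap R (counit y) \oc unit (R y) = idm (R y) }.
Arguments unit {A T N R} _ x : rename.
Arguments counit {A T N R} _ y : rename.

Record Comonad (A : Category) := {
  cfun :> Functor A A;
  delta : forall x : A, hom (cfun x) (cfun (cfun x));
  ceps : forall x : A, hom (cfun x) x;
  delta_nat : forall (x x' : A) (f : hom x x'),
      delta x' \oc fmap cfun f = fmap cfun (fmap cfun f) \oc delta x;
  ceps_nat : forall (x x' : A) (f : hom x x'),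
      ceps x' \oc fmap cfun f = f \oc ceps x;
  counit_l : forall x : A, ceps (cfun x) \oc delta x = idm (cfun x);
  counit_r : forall x : A, fmap cfun (ceps x) \oc delta x = idm (cfun x);
  coassoc : forall x : A,
      delta (cfun x) \oc delta x = fmap cfun (delta x) \oc delta x }.
Arguments delta {A} _ x : rename.
Arguments ceps {A} _ x : rename.

Section RArr.
Variables (A B : Category).

(* Object (T,(N_A,R_A),(N_B,R_B),C,xi) of RArr(A,B): (R_A,xi) is a comonad
   arrow from C to the comonad N_B R_B (comultiplication N_B eta^B R_B,
   counit eps^B), and xi is invertible with inverse xiinv. *)
Definition is_RArr_object (T : Category)
  (NA : Functor A T) (RA : Functor T A) (adjA : Adjunction NA RA)
  (NB : Functor B T) (RB : Functor T B) (adjB : Adjunction NB RB)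
  (C : Comonad A)
  (xi : forall y : T, hom (C (RA y)) (RA (NB (RB y))))
  (xiinv : forall y : T, hom (RA (NB (RB y))) (C (RA y))) : Prop :=
  (forall (y y' : T) (g : hom y y'),
      xi y' \oc fmap C (fmap RA g) = fmap RA (fmap NB (fmap RB g)) \oc xi y)
  /\ (forall y : T, fmap RA (counit adjB y) \oc xi y = ceps C (RA y))
  /\ (forall y : T,
      fmap RA (fmap NB (unit adjB (RB y))) \oc xi y
      = xi (NB (RB y)) \oc fmap C (xi y) \oc delta C (RA y))
  /\ (forall y : T, xiinv y \oc xi y = idm (C (RA y)))
  /\ (forall y : T, xi y \oc xiinv y = idm (RA (NB (RB y)))).

Definition tau_of (T : Category)
  (NA : Functor A T) (RA : Functor T A) (adjA : Adjunction NA RA)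
  (NB : Functor B T) (RB : Functor T B) (adjB : Adjunction NB RB)
  (C : Comonad A)
  (xi : forall y : T, hom (C (RA y)) (RA (NB (RB y))))
  (xiinv : forall y : T, hom (RA (NB (RB y))) (C (RA y))) (b : B)
  : hom (RA (NB b)) (RA (NB (RB (NA (RA (NB b)))))) :=
  xi (NA (RA (NB b))) \oc fmap C (unit adjA (RA (NB b)))
    \oc xiinv (NB b) \oc fmap RA (fmap NB (unit adjB b)).

Definition is_pre_torsor (T : Category)
  (NA : Functor A T) (RA : Functor T A) (adjA : Adjunction NA RA)
  (NB : Functor B T) (RB : Functor T B) (adjB : Adjunction NB RB)
  (tau : forall b : B, hom (RA (NB b)) (RA (NB (RB (NA (RA (NB b))))))) : Prop :=
  (forall (b b' : B) (f : hom b b'),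
      tau b' \oc fmap RA (fmap NB f)
      = fmap RA (fmap NB (fmap RB (fmap NA (fmap RA (fmap NB f))))) \oc tau b)
  /\ (forall b : B,
      fmap RA (fmap NB (fmap RB (counit adjA (NB b)))) \oc tau b
      = fmap RA (fmap NB (unit adjB b)))
  /\ (forall b : B,
      fmap RA (counit adjB (NA (RA (NB b)))) \oc tau b = unit adjA (RA (NB b)))
  /\ (forall b : B,
      fmap RA (fmap NB (fmap RB (fmap NA (tau b)))) \oc tau b
      = tau (RB (NA (RA (NB b)))) \oc tau b).

Definition is_comonad_morphism (C C' : Comonad A)
  (t : forall x : A, hom (C x) (C' x)) : Prop :=
  (forall (x x' : A) (f : hom x x'), t x' \oc fmap C f = fmap C' f \oc t x)
  /\ (forall x : A, ceps C' x \oc t x = ceps C x)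
  /\ (forall x : A,
      delta C' x \oc t x = fmap C' (t x) \oc t (C x) \oc delta C x).

(* For F : T' -> T with R_A F = R'_A and R_B F = R'_B; the target adjunctions
   are given with right adjoints literally R_A F and R_B F. *)
Definition a_of (T T' : Category) (F : Functor T' T)
  (NA : Functor A T) (RA : Functor T A) (adjA : Adjunction NA RA)
  (NA' : Functor A T') (adjA' : Adjunction NA' (Fcomp RA F)) (x : A)
  : hom (NA x) (F (NA' x)) :=
  counit adjA (F (NA' x)) \oc fmap NA (unit adjA' x).

Definition b_of (T T' : Category) (F : Functor T' T)
  (NB : Functor B T) (RB : Functor T B) (adjB : Adjunction NB RB)
  (NB' : Functor B T') (adjB' : Adjunction NB' (Fcomp RB F)) (z : B)
  : hom (NB z) (F (NB' z)) :=
  counit adjB (F (NB' z)) \oc fmap NB (unit adjB' z).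

Definition is_RArr_morphism (T T' : Category) (F : Functor T' T)
  (NA : Functor A T) (RA : Functor T A) (adjA : Adjunction NA RA)
  (NB : Functor B T) (RB : Functor T B) (adjB : Adjunction NB RB)
  (C : Comonad A)
  (xi : forall y : T, hom (C (RA y)) (RA (NB (RB y))))
  (NA' : Functor A T') (adjA' : Adjunction NA' (Fcomp RA F))
  (NB' : Functor B T') (adjB' : Adjunction NB' (Fcomp RB F))
  (C' : Comonad A)
  (xi' : forall y : T', hom (C' (RA (F y))) (RA (F (NB' (RB (F y))))))
  (t : forall x : A, hom (C x) (C' x)) : Prop :=
  @is_comonad_morphism C C' t
  /\ (forall y : T',
      fmap RA (b_of adjB adjB' (RB (F y))) \oc xi (F y) = xi' y \oc t (RA (F y))).

(* F is a morphism of pre-torsors: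
   (R_A b R_B a R_A b) o tau = tau' o (R_A b), where the horizontal composite
   b R_B a R_A b : N_B R_B N_A R_A N_B => F N'_B R'_B N'_A R'_A N'_B has
   component  b_{R_B F N'_A R_A F N'_B} o N_B R_B (a_{R_A F N'_B} o N_A R_A b). *)
Definition is_pretorsor_morphism (T T' : Category) (F : Functor T' T)
  (NA : Functor A T) (RA : Functor T A) (adjA : Adjunction NA RA)
  (NB : Functor B T) (RB : Functor T B) (adjB : Adjunction NB RB)
  (NA' : Functor A T') (adjA' : Adjunction NA' (Fcomp RA F))
  (NB' : Functor B T') (adjB' : Adjunction NB' (Fcomp RB F))
  (tau : forall b : B, hom (RA (NB b)) (RA (NB (RB (NA (RA (NB b)))))))
  (tau' : forall b : B, hom (RA (F (NB' b)))
                            (RA (F (NB' (RB (F (NA' (RA (F (NB' b)))))))))) : Prop :=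
  forall b : B,
    fmap RA (b_of adjB adjB' (RB (F (NA' (RA (F (NB' b))))))
             \oc fmap NB (fmap RB (a_of adjA adjA' (RA (F (NB' b)))
                                   \oc fmap NA (fmap RA (b_of adjB adjB' b)))))
      \oc tau b
    = tau' b \oc fmap RA (b_of adjB adjB' b).

End RArr.

Arguments is_RArr_object {A B T NA RA} adjA {NB RB} adjB C xi xiinv.
Arguments tau_of {A B T NA RA} adjA {NB RB} adjB C xi xiinv b.
Arguments is_comonad_morphism {A} C C' t.
Arguments is_RArr_morphism {A B T T' F NA RA} adjA {NB RB} adjB C xi
  {NA'} adjA' {NB'} adjB' C' xi' t.

(* Main.v *)
Require Import Defs.
Set Implicit Arguments.
Unset Strict Implicit.

Lemma lift2 (K : Category) (a b c d : K) (g : hom b c) (f : hom a b) (k : hom a c) :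
  g \oc f = k -> forall (P : hom c d), P \oc g \oc f = P \oc k.
Proof. intros H P. rewrite <- cmp_assoc, H. reflexivity. Qed.
Lemma lift3 (K : Category) (a b c d e : K) (h : hom c d) (g : hom b c) (f : hom a b) (k : hom a d) :
  h \oc g \oc f = k -> forall (P : hom d e), P \oc h \oc g \oc f = P \oc k.
Proof. intros H P. rewrite <- !cmp_assoc, <- H, !cmp_assoc. reflexivity. Qed.
Lemma lift4 (K : Category) (a b c d e x : K) (i : hom d e) (h : hom c d) (g : hom b c) (f : hom a b) (k : hom a e) :
  i \oc h \oc g \oc f = k -> forall (P : hom e x), P \oc i \oc h \oc g \oc f = P \oc k.
Proof. intros H P. rewrite <- !cmp_assoc, <- H, !cmp_assoc. reflexivity. Qed.

Ltac norm := repeat rewrite ?cmp_assoc, ?cmp_id_l, ?cmp_id_r.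
Ltac lrw H := first [rewrite (lift4 H) | rewrite (lift3 H) | rewrite (lift2 H) | rewrite H]; norm.
Ltac fc := rewrite <- ?fmap_comp.
Lemma part1 (A B : Category) (T : Category)
     (NA : Functor A T) (RA : Functor T A) (adjA : Adjunction NA RA)
     (NB : Functor B T) (RB : Functor T B) (adjB : Adjunction NB RB)
     (C : Comonad A)
     (xi : forall y : T, hom (C (RA y)) (RA (NB (RB y))))
     (xiinv : forall y : T, hom (RA (NB (RB y))) (C (RA y))) :
     is_RArr_object adjA adjB C xi xiinv ->
     is_pre_torsor adjA adjB (tau_of adjA adjB C xi xiinv).
Proof.
  intros [Hnat [Heps [Hcom [Hinv1 Hinv2]]]].
  assert (Xnat : forall (y y' : T) (g : hom y y'),
      xiinv y' \oc fmap RA (fmap NB (fmap RB g)) = fmap C (fmap RA g) \oc xiinv y).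
  { intros y y' g.
    transitivity (xiinv y' \oc fmap RA (fmap NB (fmap RB g)) \oc (xi y \oc xiinv y)).
    { rewrite Hinv2, cmp_id_r. reflexivity. }
    norm. lrw (eq_sym (Hnat _ _ g)). lrw (Hinv1 y'). reflexivity. }
  assert (N1 : forall (b b' : B) (f : hom b b'),
     fmap RA (fmap NB (unit adjB b')) \oc fmap RA (fmap NB f)
     = fmap RA (fmap NB (fmap RB (fmap NB f))) \oc fmap RA (fmap NB (unit adjB b))).
  { intros. fc. rewrite (unit_nat adjB). reflexivity. }
  assert (UC : forall (x x' : A) (f : hom x x'),
     fmap C (unit adjA x') \oc fmap C f = fmap C (fmap RA (fmap NA f)) \oc fmap C (unit adjA x)).
  { intros. fc. rewrite (unit_nat adjA). reflexivity. }
  assert (T1 : forall y, fmap C (fmap RA (counit adjA y)) \oc fmap C (unit adjA (RA y)) = idm _).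
  { intros. fc. rewrite (triangle_R adjA), fmap_id. reflexivity. }
  assert (CX : forall y, ceps C (RA y) \oc xiinv y = fmap RA (counit adjB y)).
  { intros. rewrite <- Heps. norm. lrw (Hinv2 y). reflexivity. }
  assert (T2 : forall b, fmap RA (counit adjB (NB b)) \oc fmap RA (fmap NB (unit adjB b)) = idm _).
  { intros. fc. rewrite (triangle_N adjB), fmap_id. reflexivity. }
  assert (XiCo : forall y, fmap C (xi y) \oc delta C (RA y)
      = xiinv (NB (RB y)) \oc fmap RA (fmap NB (unit adjB (RB y))) \oc xi y).
  { intros. rewrite <- (cmp_id_l (fmap C (xi y) \oc delta C (RA y))), <- (Hinv1 (NB (RB y))).
    norm. lrw (eq_sym (Hcom y)). reflexivity. }
  assert (N2 : forall b, fmap RA (fmap NB (fmap RB (fmap NB (unit adjB b)))) \oc fmap RA (fmap NB (unit adjB b))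
        = fmap RA (fmap NB (unit adjB (RB (NB b)))) \oc fmap RA (fmap NB (unit adjB b))).
  { intros. fc. rewrite (unit_nat adjB). reflexivity. }
  assert (Coalg : forall b, fmap C (xiinv (NB b)) \oc fmap C (fmap RA (fmap NB (unit adjB b)))
        \oc xiinv (NB b) \oc fmap RA (fmap NB (unit adjB b))
     = delta C (RA (NB b)) \oc xiinv (NB b) \oc fmap RA (fmap NB (unit adjB b))).
  { intros. lrw (eq_sym (Xnat _ _ (fmap NB (unit adjB b)))). lrw (N2 b).
    rewrite <- (cmp_id_l (delta C (RA (NB b)))), <- (fmap_id C), <- (Hinv1 (NB b)), fmap_comp.
    norm. lrw (XiCo (NB b)). lrw (Hinv2 (NB b)). reflexivity. }
  assert (TauCo : forall b, fmap C (tau_of adjA adjB C xi xiinv b) \oc xiinv (NB b)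
        \oc fmap RA (fmap NB (unit adjB b))
     = xiinv (NB (RB (NA (RA (NB b))))) \oc fmap RA (fmap NB (unit adjB (RB (NA (RA (NB b))))))
        \oc tau_of adjA adjB C xi xiinv b).
  { intros. unfold tau_of. rewrite !fmap_comp. norm.
    lrw (Coalg b). lrw (eq_sym (delta_nat C (unit adjA (RA (NB b))))).
    lrw (XiCo (NA (RA (NB b)))). reflexivity. }
  unfold is_pre_torsor. split; [|split; [|split]].
  - intros b b' f. unfold tau_of. norm.
    lrw (N1 b b' f). lrw (Xnat _ _ (fmap NB f)). lrw (UC _ _ (fmap RA (fmap NB f))).
    lrw (Hnat _ _ (fmap NA (fmap RA (fmap NB f)))). reflexivity.
  - intros b. unfold tau_of. norm.
    lrw (eq_sym (Hnat _ _ (counit adjA (NB b)))). lrw (T1 (NB b)). lrw (Hinv2 (NB b)). reflexivity.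
  - intros b. unfold tau_of. norm.
    lrw (Heps (NA (RA (NB b)))). lrw (ceps_nat C (unit adjA (RA (NB b)))).
    lrw (CX (NB b)). lrw (T2 b). reflexivity.
  - intros b.
    transitivity (fmap RA (fmap NB (fmap RB (fmap NA (tau_of adjA adjB C xi xiinv b))))
      \oc (xi (NA (RA (NB b))) \oc fmap C (unit adjA (RA (NB b)))
           \oc xiinv (NB b) \oc fmap RA (fmap NB (unit adjB b)))).
    { reflexivity. }
    norm. lrw (eq_sym (Hnat _ _ (fmap NA (tau_of adjA adjB C xi xiinv b)))).
    lrw (eq_sym (UC _ _ (tau_of adjA adjB C xi xiinv b))).
    lrw (TauCo b). reflexivity.
Qed.
Lemma part2 (A B : Category) (T : Category)
     (NA : Functor A T) (RA : Functor T A) (adjA : Adjunction NA RA)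
     (NB : Functor B T) (RB : Functor T B) (adjB : Adjunction NB RB)
     (C : Comonad A)
     (xi : forall y : T, hom (C (RA y)) (RA (NB (RB y))))
     (xiinv : forall y : T, hom (RA (NB (RB y))) (C (RA y)))
     (T' : Category) (F : Functor T' T)
     (NA' : Functor A T') (adjA' : Adjunction NA' (Fcomp RA F))
     (NB' : Functor B T') (adjB' : Adjunction NB' (Fcomp RB F))
     (C' : Comonad A)
     (xi' : forall y : T', hom (C' (RA (F y))) (RA (F (NB' (RB (F y))))))
     (xiinv' : forall y : T', hom (RA (F (NB' (RB (F y))))) (C' (RA (F y))))
     (t : forall x : A, hom (C x) (C' x)) :
     is_RArr_object adjA adjB C xi xiinv ->
     is_RArr_object adjA' adjB' C' xi' xiinv' ->
     is_RArr_morphism adjA adjB C xi adjA' adjB' C' xi' t ->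
     is_pretorsor_morphism adjA adjB adjA' adjB'
       (tau_of adjA adjB C xi xiinv) (tau_of adjA' adjB' C' xi' xiinv').
Proof.
  intros [Hnat [Heps [Hcom [Hinv1 Hinv2]]]] [Hnat' [Heps' [Hcom' [Hinv1' Hinv2']]]]
    [[Htnat [Hteps Htdel]] Hmor].
  cbn [Fcomp fobj fmap] in *.
  assert (Xnat : forall (y y' : T) (g : hom y y'),
      xiinv y' \oc fmap RA (fmap NB (fmap RB g)) = fmap C (fmap RA g) \oc xiinv y).
  { intros y y' g.
    transitivity (xiinv y' \oc fmap RA (fmap NB (fmap RB g)) \oc (xi y \oc xiinv y)).
    { rewrite Hinv2, cmp_id_r. reflexivity. }
    norm. lrw (eq_sym (Hnat _ _ g)). lrw (Hinv1 y'). reflexivity. }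
  assert (UA : forall x, fmap RA (a_of adjA adjA' x) \oc unit adjA x = unit adjA' x).
  { intros x. unfold a_of. rewrite fmap_comp. norm.
    lrw (eq_sym (unit_nat adjA (unit adjA' x))).
    cbn [Fcomp fobj fmap]; rewrite (triangle_R adjA). norm. reflexivity. }
  assert (UB : forall z, fmap RB (b_of adjB adjB' z) \oc unit adjB z = unit adjB' z).
  { intros z. unfold b_of. rewrite fmap_comp. norm.
    lrw (eq_sym (unit_nat adjB (unit adjB' z))).
    cbn [Fcomp fobj fmap]; rewrite (triangle_R adjB). norm. reflexivity. }
  assert (BN : forall (z z' : B) (f : hom z z'),
      b_of adjB adjB' z' \oc fmap NB f = fmap F (fmap NB' f) \oc b_of adjB adjB' z).
  { intros. unfold b_of. norm.
    assert (E : fmap NB (unit adjB' z') \oc fmap NB f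
       = fmap NB (fmap RB (fmap F (fmap NB' f))) \oc fmap NB (unit adjB' z)).
    { rewrite <- !fmap_comp. f_equal. apply (unit_nat adjB'). }
    lrw E. lrw (eq_sym (counit_nat adjB (fmap F (fmap NB' f)))). reflexivity. }
  assert (TX : forall y, t (RA (F y)) \oc xiinv (F y)
      = xiinv' y \oc fmap RA (b_of adjB adjB' (RB (F y)))).
  { intros y. transitivity (xiinv' y \oc xi' y \oc t (RA (F y)) \oc xiinv (F y)).
    { rewrite Hinv1'. norm. reflexivity. }
    lrw (eq_sym (Hmor y)). lrw (Hinv2 (F y)). reflexivity. }
  intros b. unfold tau_of. rewrite !fmap_comp. norm.
  cbn [Fcomp fobj fmap].
  set (bb := b_of adjB adjB' b).
  assert (AE0 : fmap RA (a_of adjA adjA' (RA (F (NB' b)))) \oc fmap RA (fmap NA (fmap RA bb)) \oc unit adjA (RA (NB b))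
     = unit adjA' (RA (F (NB' b))) \oc fmap RA bb).
  { lrw (eq_sym (unit_nat adjA (fmap RA bb))). lrw (UA (RA (F (NB' b)))). reflexivity. }
  assert (AE : fmap C (fmap RA (a_of adjA adjA' (RA (F (NB' b))))) \oc fmap C (fmap RA (fmap NA (fmap RA bb))) \oc fmap C (unit adjA (RA (NB b)))
     = fmap C (unit adjA' (RA (F (NB' b)))) \oc fmap C (fmap RA bb)).
  { rewrite <- !(@fmap_comp _ _ C). rewrite AE0. reflexivity. }
  assert (UB' : fmap RA (fmap NB (fmap RB bb)) \oc fmap RA (fmap NB (unit adjB b))
     = fmap RA (fmap NB (unit adjB' b))).
  { rewrite <- !(@fmap_comp _ _ RA), <- !(@fmap_comp _ _ NB). rewrite UB. reflexivity. }
  assert (BN' : fmap RA (b_of adjB adjB' (RB (F (NB' b)))) \oc fmap RA (fmap NB (unit adjB' b))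
     = fmap RA (fmap F (fmap NB' (unit adjB' b))) \oc fmap RA bb).
  { rewrite <- !(@fmap_comp _ _ RA). rewrite BN. reflexivity. }
  lrw (eq_sym (Hnat _ _ (fmap NA (fmap RA bb)))).
  lrw (eq_sym (Hnat _ _ (a_of adjA adjA' (RA (F (NB' b)))))).
  lrw (Hmor (NA' (RA (F (NB' b))))).
  lrw AE.
  lrw (Htnat _ _ (unit adjA' (RA (F (NB' b))))).
  lrw (eq_sym (Xnat _ _ bb)).
  lrw UB'.
  lrw (TX (NB' b)).
  lrw BN'.
  reflexivity.
Qed.
Theorem mainTheorem7 (A B : Category) :
  (* (1) every object of RArr(A,B) yields a pre-torsor *)
  (forall (T : Category)
     (NA : Functor A T) (RA : Functor T A) (adjA : Adjunction NA RA)
     (NB : Functor B T) (RB : Functor T B) (adjB : Adjunction NB RB)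
     (C : Comonad A)
     (xi : forall y : T, hom (C (RA y)) (RA (NB (RB y))))
     (xiinv : forall y : T, hom (RA (NB (RB y))) (C (RA y))),
     is_RArr_object adjA adjB C xi xiinv ->
     is_pre_torsor adjA adjB (tau_of adjA adjB C xi xiinv))
  /\
  (* (2) every morphism (F,t) of RArr(A,B) gives a morphism of pre-torsors *)
  (forall (T : Category)
     (NA : Functor A T) (RA : Functor T A) (adjA : Adjunction NA RA)
     (NB : Functor B T) (RB : Functor T B) (adjB : Adjunction NB RB)
     (C : Comonad A)
     (xi : forall y : T, hom (C (RA y)) (RA (NB (RB y))))
     (xiinv : forall y : T, hom (RA (NB (RB y))) (C (RA y)))
     (T' : Category) (F : Functor T' T)
     (NA' : Functor A T') (adjA' : Adjunction NA' (Fcomp RA F))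
     (NB' : Functor B T') (adjB' : Adjunction NB' (Fcomp RB F))
     (C' : Comonad A)
     (xi' : forall y : T', hom (C' (RA (F y))) (RA (F (NB' (RB (F y))))))
     (xiinv' : forall y : T', hom (RA (F (NB' (RB (F y))))) (C' (RA (F y))))
     (t : forall x : A, hom (C x) (C' x)),
     is_RArr_object adjA adjB C xi xiinv ->
     is_RArr_object adjA' adjB' C' xi' xiinv' ->
     is_RArr_morphism adjA adjB C xi adjA' adjB' C' xi' t ->
     is_pretorsor_morphism adjA adjB adjA' adjB'
       (tau_of adjA adjB C xi xiinv) (tau_of adjA' adjB' C' xi' xiinv')).
Proof.
  split; intros; [eapply part1 | eapply part2]; eauto.
Qed.
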